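(* Let $m\ge2$ be an integer and $z$ a complex number with $0<|z|<1$. Then $$\sum_{k=1}^\infty\frac{\binom{2k}{m}z^{2k}}{(2k-1)(2k)(2k+1)}=\frac{1}{4z}\sum_{j=0}^{m-1}\frac{1}{m-j}\left((-1)^{m-1}\Big(\frac{z}{1+z}\Big)^{m-j}+(-1)^j\Big(\frac{z}{1-z}\Big)^{m-j}\right)$$ $$+\frac{1}{2m}\left((-1)^{m-1}\Big(1+\frac z2\Big)\Big(\frac{z}{1+z}\Big)^m-\Big(1-\frac z2\Big)\Big(\frac{z}{1-z}\Big)^m\right)$$ $$+\frac{1}{4(m-1)}\left((-1)^m(1+z)\Big(\frac{z}{1+z}\Big)^m+(1-z)\Big(\frac{z}{1-z}\Big)^m\right)+\frac{(-1)^m}{4z}\ln\Big(\frac{1+z}{1-z}\Big).$$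
   Context: $\ln$ denotes the principal branch of the logarithm. *)

(* Defs.v *)
From Stdlib Require Import Reals.
From Coquelicot Require Import Coquelicot.
Open Scope C_scope.

(* Principal argument in (-PI, PI] of a nonzero complex number. *)
Definition Carg (w : C) : R :=
  if Rle_dec 0 (Im w) then acos (Re w / Cmod w) else (- acos (Re w / Cmod w))%R.

Definition Cln (w : C) : C := (RtoC (ln (Cmod w)) + Ci * RtoC (Carg w))%C.

Definition sgn (n : nat) : C := RtoC ((-1) ^ n).

(* Binomial coefficient binom(n,k) as a real, with binom(n,k) = 0 for k > n
   (Stdlib's Binomial.C is not zero in that case). *)
Definition binomR (n k : nat) : R := if Nat.leb k n then Binomial.C n k else 0%R.

(* Main.v *)
Require Import Defs.
From Stdlib Require Import Reals.
From Coquelicot Require Import Coquelicot.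
From Stdlib Require Import Lra Lia Factorial Arith.
Open Scope C_scope.


Definition ser (c : nat -> R) (z : C) : nat -> C := fun N => RtoC (c N) * Cpow z N.

Lemma ser_plus c d z s t : is_series (ser c z) s -> is_series (ser d z) t ->
  is_series (ser (fun N => (c N + d N)%R) z) (s + t).
Proof.
  intros H1 H2. pose proof (is_series_plus _ _ _ _ H1 H2) as H.
  eapply is_series_ext; [|exact H]. intro n; unfold ser; simpl.
  change (plus (RtoC (c n) * Cpow z n) (RtoC (d n) * Cpow z n) = RtoC (c n + d n) * Cpow z n).
  unfold plus; simpl. rewrite RtoC_plus; ring.
Qed.

Lemma ser_scal r c z s : is_series (ser c z) s ->
  is_series (ser (fun N => (r * c N)%R) z) (RtoC r * s).
Proof.
  intros H1. pose proof (@is_series_scal C_AbsRing C_NormedModule (RtoC r) _ _ H1) as H.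
  eapply is_series_ext; [|exact H]. intro n; unfold ser; simpl.
  change (RtoC r * (RtoC (c n) * Cpow z n) = RtoC (r * c n) * Cpow z n).
  rewrite RtoC_mult; ring.
Qed.

Definition shift (c : nat -> R) (N : nat) : R :=
  match N with O => 0%R | S k => c k end.

Lemma ser_shift c z s : is_series (ser c z) s ->
  is_series (ser (shift c) z) (z * s).
Proof.
  intros H1. pose proof (@is_series_scal C_AbsRing C_NormedModule z _ _ H1) as H.
  apply is_series_decr_1.
  match goal with |- is_series _ ?L => replace L with (scal z s) end.
  2:{ unfold ser, shift, plus, opp, scal; simpl. unfold mult; simpl.
      apply injective_projections; simpl; ring. }
  eapply is_series_ext; [|exact H]. intro n; unfold ser; simpl.
  change (z * (RtoC (c n) * Cpow z n) = RtoC (c n) * (z * Cpow z n)). ring.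
Qed.

Lemma ser_sum (c : nat -> nat -> R) z (s : nat -> C) n :
  (forall j, (j <= n)%nat -> is_series (ser (c j) z) (s j)) ->
  is_series (ser (fun N => sum_n (fun j => c j N) n) z) (sum_n s n).
Proof.
  induction n; intros H.
  - rewrite sum_O. eapply is_series_ext; [|apply (H 0%nat); lia].
    intro N; unfold ser; rewrite sum_O; reflexivity.
  - rewrite sum_Sn. eapply is_series_ext; [|apply ser_plus; [apply IHn; intros; apply H; lia| apply (H (S n)); lia]].
    intro N; unfold ser. rewrite sum_Sn. reflexivity.
Qed.

Lemma ser_ext c d z s : (forall N, c N = d N) -> is_series (ser c z) s -> is_series (ser d z) s.
Proof. intros E H; eapply is_series_ext; [|exact H]; intro; unfold ser; rewrite E; auto. Qed.

Lemma series_uniq (a : nat -> C) l1 l2 : is_series a l1 -> is_series a l2 -> l1 = l2.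
Proof.
  intros H1 H2. eapply (@filterlim_locally_unique nat C_AbsRing C_NormedModule); eauto.
  apply Proper_StrongProper, eventually_filter.
Qed.

Section Part_P2.
Local Open Scope R_scope.

Lemma fact_pos n : 0 < INR (fact n).
Proof. apply lt_0_INR, lt_O_fact. Qed.

Lemma binomR_formula n k : (k <= n)%nat ->
  binomR n k = INR (fact n) / (INR (fact k) * INR (fact (n - k))).
Proof. intros H; unfold binomR. apply Nat.leb_le in H; rewrite H; reflexivity. Qed.

Lemma binomR_gt n k : (n < k)%nat -> binomR n k = 0.
Proof. intros H; unfold binomR. destruct (Nat.leb k n) eqn:E; auto. apply Nat.leb_le in E; lia. Qed.

Lemma binomR_pos n k : (k <= n)%nat -> 0 < binomR n k.
Proof. intros H; rewrite binomR_formula by auto.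
  pose proof (fact_pos n); pose proof (fact_pos k); pose proof (fact_pos (n-k)).
  apply Rdiv_lt_0_compat; auto. apply Rmult_lt_0_compat; auto. Qed.

Lemma binomR_nonneg n k : 0 <= binomR n k.
Proof. destruct (le_lt_dec k n). left; apply binomR_pos; auto. rewrite binomR_gt; auto; lra. Qed.

Lemma binomR_0 n : binomR n 0 = 1.
Proof. rewrite binomR_formula by lia. rewrite Nat.sub_0_r. simpl. field. apply INR_fact_neq_0. Qed.

Lemma binomR_absorb n k : INR (S k) * binomR (S n) (S k) = INR (S n) * binomR n k.
Proof.
  destruct (le_lt_dec k n).
  - rewrite !binomR_formula by lia. replace (S n - S k)%nat with (n - k)%nat by lia.
    change (fact (S n)) with (S n * fact n)%nat. change (fact (S k)) with (S k * fact k)%nat.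
    rewrite !mult_INR. pose proof (fact_pos n); pose proof (fact_pos k); pose proof (fact_pos (n-k)).
    pose proof (pos_INR k); pose proof (pos_INR n). rewrite !S_INR. field. repeat split; lra.
  - rewrite !binomR_gt by lia. ring.
Qed.

Lemma binomR_pascal n k : binomR (S n) (S k) = binomR n k + binomR n (S k).
Proof.
  destruct (lt_eq_lt_dec k n) as [[H|H]|H].
  - unfold binomR. replace (Nat.leb (S k) (S n)) with true by (symmetry; apply Nat.leb_le; lia).
    replace (Nat.leb k n) with true by (symmetry; apply Nat.leb_le; lia).
    replace (Nat.leb (S k) n) with true by (symmetry; apply Nat.leb_le; lia).
    rewrite pascal; auto.
  - subst. unfold binomR. rewrite !Nat.leb_refl.
    replace (Nat.leb (S n) n) with false by (symmetry; apply Nat.leb_gt; lia).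
    rewrite !C_n_n. ring.
  - rewrite !binomR_gt by lia. ring.
Qed.

Lemma binomR_ratio q n : binomR (q + S n) q * INR (S n) = INR (q + S n) * binomR (q + n) q.
Proof.
  rewrite !binomR_formula by lia. replace (q + S n - q)%nat with (S n) by lia.
  replace (q + n - q)%nat with n by lia. replace (q + S n)%nat with (S (q + n)) by lia.
  change (fact (S (q+n))) with (S (q+n) * fact (q+n))%nat. change (fact (S n)) with (S n * fact n)%nat.
  rewrite !mult_INR. pose proof (fact_pos n); pose proof (fact_pos q); pose proof (fact_pos (q+n)).
  pose proof (pos_INR n). rewrite !S_INR. field. repeat split; lra.
Qed.

Lemma binom_series_ex (q : nat) (r : R) : 0 < r < 1 ->
  ex_series (fun N => Rabs (binomR N q * r ^ N)).
Proof.
  intros Hr.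
  apply (ex_series_incr_n _ q).
  set (a := fun n => binomR (q + n) q * r ^ (q + n)).
  assert (Ha : forall n, 0 < a n).
  { intro n; unfold a. apply Rmult_lt_0_compat. apply binomR_pos; lia. apply pow_lt; lra. }
  assert (H : ex_series (fun n => Rabs (a n))).
  { apply (ex_series_DAlembert _ r). lra. intro n; specialize (Ha n); lra.
    apply is_lim_seq_ext with (fun n => r * (1 + INR q * / INR (S n))).
    - intro n. rewrite Rabs_pos_eq.
      2:{ left; apply Rdiv_lt_0_compat; auto. }
      unfold a. pose proof (binomR_ratio q n) as E.
      assert (0 < binomR (q+n) q) by (apply binomR_pos; lia).
      assert (0 < INR (S n)) by (apply lt_0_INR; lia).
      replace (q + S n)%nat with (S (q + n)) by lia. simpl pow.
      replace (q + S n)%nat with (S (q + n)) in E by lia.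
      assert (binomR (S (q + n)) q = INR (S (q+n)) * binomR (q + n) q / INR (S n)) as E2.
      { apply (Rmult_eq_reg_r (INR (S n))). rewrite E. field. lra. lra. }
      rewrite E2. rewrite !S_INR, plus_INR. pose proof (pos_INR n). pose proof (pos_INR q). pose proof (pow_lt r (q+n) ltac:(lra)). field. lra.

    - assert (L : is_lim_seq (fun n => r * (1 + INR q * / INR (S n))) (r * (1 + INR q * 0))).
      { apply is_lim_seq_mult'. apply is_lim_seq_const.
        apply is_lim_seq_plus'. apply is_lim_seq_const.
        apply is_lim_seq_mult'. apply is_lim_seq_const.
        apply (is_lim_seq_incr_1 (fun n => / INR n) 0).
        replace (Finite 0) with (Rbar_inv p_infty) by reflexivity.
        apply is_lim_seq_inv. apply is_lim_seq_INR. discriminate. }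
      replace (r * (1 + INR q * 0)) with r in L by ring. exact L. }
  eapply ex_series_ext; [|exact H]. intro n; unfold a; reflexivity.
Qed.

End Part_P2.


Lemma ser_tail c w (L : C) : is_series (ser c w) L -> is_series (fun k => ser c w (S k)) (L - RtoC (c 0%nat)).
Proof.
  intros H. apply is_series_incr_1.
  match goal with |- is_series _ ?X => replace X with L end. exact H.
  unfold ser, plus; simpl. change (@eq C L (L - RtoC (c 0%nat) + RtoC (c 0%nat) * 1)). ring.
Qed.

Lemma one_minus_nz w : Cmod w < 1 -> 1 - w <> 0.
Proof. intros H E. assert (w = 1) by (symmetry; apply (proj2 (Ceq_minus 1 w)) in E; auto).
  subst. rewrite Cmod_1 in H. lra. Qed.

Lemma geomC w : Cmod w < 1 -> is_series (ser (fun _ => 1%R) w) (/(1-w)).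
Proof.
  intros Hw.
  assert (Ex : ex_series (ser (fun _ => 1%R) w)).
  { apply (@ex_series_le C_AbsRing C_CompleteNormedModule _ (fun n => (Cmod w ^ n)%R)).
    - intro n. change (norm (ser (fun _ : nat => 1%R) w n)) with (Cmod (RtoC 1 * Cpow w n)).
      rewrite Cmod_mult, Cmod_1, Cmod_pow. lra.
    - apply ex_series_geom. rewrite Rabs_pos_eq; auto. apply Cmod_ge_0. }
  destruct Ex as [L HL]. change C in L.
  pose proof (ser_tail _ _ _ HL) as H1.
  pose proof (@is_series_scal C_AbsRing C_NormedModule w _ _ HL) as H2.
  assert (E : L - RtoC 1 = scal w L).
  { apply (series_uniq (fun k => ser (fun _ => 1%R) w (S k))). exact H1.
    eapply is_series_ext; [|exact H2]. intro n; unfold ser; simpl.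
    change (w * (RtoC 1 * Cpow w n) = RtoC 1 * (w * Cpow w n)). ring. }
  change (L - RtoC 1 = w * L) in E.
  replace (/ (1 - w)) with L. exact HL.
  pose proof (one_minus_nz w Hw).
  replace L with (/(1-w) * ((1 - w) * L)) at 1 by (field; auto).
  replace ((1-w)*L) with (L - (L - RtoC 1)) by (rewrite E; ring). field; auto.
Qed.

Lemma NB q w : 0 < Cmod w < 1 ->
  is_series (ser (fun N => binomR N q) w) (Cpow w q / Cpow (1 - w) (S q)).
Proof.
  intros Hw. pose proof (one_minus_nz w (proj2 Hw)) as Hnz.
  induction q.
  - replace (Cpow w 0 / Cpow (1-w) 1) with (/(1-w)) by (simpl; field; auto).
    eapply ser_ext; [|apply geomC; tauto]. intro N; simpl. rewrite binomR_0; auto.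
  - assert (Ex : ex_series (ser (fun N => binomR N (S q)) w)).
    { apply (@ex_series_le C_AbsRing C_CompleteNormedModule _ (fun N => Rabs (binomR N (S q) * Cmod w ^ N))).
      - intro n. change (norm (ser (fun N => binomR N (S q)) w n)) with (Cmod (RtoC (binomR n (S q)) * Cpow w n)).
        rewrite Cmod_mult, Cmod_R, Cmod_pow, Rabs_mult, (Rabs_pos_eq (_ ^ _)). lra.
        apply pow_le, Cmod_ge_0.
      - apply binom_series_ex; auto. }
    destruct Ex as [L HL]. change C in L.
    pose proof (ser_shift _ _ _ HL) as H1.
    pose proof (ser_plus _ _ _ _ _ HL (ser_scal (-1) _ _ _ H1)) as H2.
    pose proof (ser_shift _ _ _ IHq) as H3.
    assert (E : L + RtoC (-1) * (w * L) = w * (Cpow w q / Cpow (1 - w) (S q))).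
    { apply (series_uniq (ser (shift (fun N => binomR N q)) w)); auto.
      eapply ser_ext; [|exact H2]. intro N; destruct N; simpl.
      - rewrite binomR_gt by lia. ring.
      - rewrite binomR_pascal. ring. }
    replace (Cpow w (S q) / Cpow (1 - w) (S (S q))) with L. exact HL.
    assert (Cpow (1 - w) (S q) <> 0) by (apply Cpow_nz; auto).
    change (Cpow (1 - w) (S (S q))) with ((1 - w) * Cpow (1 - w) (S q)).
    change (Cpow w (S q)) with (w * Cpow w q).
    replace (RtoC (-1)) with (- RtoC 1) in E by (apply injective_projections; simpl; ring).
    replace L with (/(1-w) * (L + - RtoC 1 * (w * L))) at 1 by (field; auto).
    rewrite E. field. split; auto.
Qed.

Section Part_P4.
Local Open Scope R_scope.

Lemma sum_n_Re (a : nat -> C) n : sum_n (fun k => Re (a k)) n = Re (sum_n a n).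
Proof. induction n. rewrite !sum_O; auto. rewrite !sum_Sn, IHn. reflexivity. Qed.
Lemma sum_n_Im (a : nat -> C) n : sum_n (fun k => Im (a k)) n = Im (sum_n a n).
Proof. induction n. rewrite !sum_O; auto. rewrite !sum_Sn, IHn. reflexivity. Qed.

Lemma is_series_Re (a : nat -> C) (l : C) : is_series a l -> is_series (fun n => Re (a n)) (Re l).
Proof.
  intros H. unfold is_series in *.
  eapply filterlim_ext. intro n. symmetry. apply sum_n_Re.
  eapply filterlim_comp. exact H. destruct l as [u v]. apply (continuous_fst u v).
Qed.
Lemma is_series_Im (a : nat -> C) (l : C) : is_series a l -> is_series (fun n => Im (a n)) (Im l).
Proof.
  intros H. unfold is_series in *.
  eapply filterlim_ext. intro n. symmetry. apply sum_n_Im.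
  eapply filterlim_comp. exact H. destruct l as [u v]. apply (continuous_snd u v).
Qed.

Lemma is_series_RI (a : nat -> C) (r i : R) :
  is_series (fun n => Re (a n)) r -> is_series (fun n => Im (a n)) i -> is_series a (r, i).
Proof.
  intros H1 H2. unfold is_series in *.
  pose proof (filterlim_pair _ _ H1 H2) as H.
  assert (Hl : filterlim (fun p : R * R => (p : C)) (filter_prod (locally r) (locally i)) (locally ((r, i) : C))).
  { intros P [eps Heps]. exists (ball r eps) (ball i eps).
    + exists eps; auto.
    + exists eps; auto.
    + intros u v Hu Hv. apply Heps. split; auto. }
  eapply filterlim_ext; [|exact (filterlim_comp _ _ _ _ _ _ _ _ H Hl)].
  intro n. simpl. rewrite sum_n_Re, sum_n_Im. apply injective_projections; reflexivity.
Qed.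

Lemma ln_sqrt' a : 0 < a -> ln (sqrt a) = ln a / 2.
Proof.
  intros Ha. assert (0 < sqrt a) by (apply sqrt_lt_R0; auto).
  replace (ln a) with (ln (sqrt a * sqrt a)). rewrite ln_mult; auto; field.
  rewrite sqrt_sqrt; auto; lra.
Qed.

Lemma carg_atan (w : C) : 0 < Re w -> Carg w = atan (Im w / Re w).
Proof.
  destruct w as [a b]. simpl. intros Ha. unfold Carg, Cmod; simpl.
  set (th := atan (b / a)).
  assert (Hc : a / sqrt (a ^ 2 + b ^ 2) = cos th).
  { unfold th. rewrite cos_atan.
    replace (a ^ 2 + b ^ 2) with (a * a * (1 + (b/a)²)) by (unfold Rsqr; field; lra).
    rewrite sqrt_mult. rewrite sqrt_square by lra. field.
    split. apply Rgt_not_eq, sqrt_lt_R0. pose proof (Rle_0_sqr (b/a)); lra. lra.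
    nra. pose proof (Rle_0_sqr (b/a)); lra. }
  pose proof (atan_bound (b / a)) as Hb. fold th in Hb. pose proof PI_RGT_0.
  replace (a * (a * 1) + b * (b * 1)) with (a ^ 2 + b ^ 2) by ring. rewrite Hc. destruct (Rle_dec 0 b).
  - apply acos_cos. split; [|lra]. unfold th. rewrite <- atan_0.
    destruct (Req_dec b 0) as [Hb0|Hb0].
    + subst b. replace (0/a) with 0 by (field; lra). lra.
    + left; apply atan_increasing. apply Rdiv_lt_0_compat; lra.
  - assert (th < 0). { unfold th. rewrite <- atan_0. apply atan_increasing.
      replace (b / a) with (- ((-b)/a)) by (field; lra). assert (0 < -b/a) by (apply Rdiv_lt_0_compat; lra). lra. }
    rewrite <- (cos_neg th). rewrite acos_cos by lra. ring.
Qed.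

End Part_P4.

Section Part_P5.
Local Open Scope R_scope.

Definition dlog (n : nat) : R := (1 - (-1) ^ n) / INR n.

Lemma neg1_pow n : (-1) ^ n = 1 \/ (-1) ^ n = -1.
Proof. induction n; simpl. auto. destruct IHn as [-> | ->]; [right|left]; ring. Qed.

Lemma dlog_bound n : Rabs (dlog n) <= 2.
Proof.
  unfold dlog. destruct n.
  - simpl. replace ((1 - 1) / INR 0) with 0 by (simpl; unfold Rdiv; ring). rewrite Rabs_pos_eq; lra.
  - assert (1 <= INR (S n)) by (rewrite S_INR; pose proof (pos_INR n); lra).
    rewrite Rabs_div by lra. rewrite (Rabs_pos_eq (INR (S n))) by lra.
    apply Rle_trans with (Rabs (1 - (-1) ^ S n)).
    + apply Rmult_le_reg_r with (INR (S n)); [lra|]. unfold Rdiv; rewrite Rmult_assoc, Rinv_l by lra.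
      pose proof (Rabs_pos (1 - (-1) ^ S n)). nra.
    + destruct (neg1_pow (S n)) as [-> | ->]; rewrite Rabs_pos_eq; lra.
Qed.

Lemma PSd_alg (a t : R) n : (t ^ n + (-1) ^ n * t ^ n) * a = INR (S n) * ((1 - -1 * (-1) ^ n) / INR (S n) * a) * t ^ n.
Proof. assert (INR (S n) <> 0) by (apply not_0_INR; lia). field; auto. Qed.

Section LogS.
Variables x y : R.
Hypothesis Hz : 0 < x ^ 2 + y ^ 2 < 1.

Let z : C := (x, y).
Definition au (n : nat) : R := dlog n * Re (Cpow z n).
Definition av (n : nat) : R := dlog n * Im (Cpow z n).

Lemma Cmod_z : Cmod z = sqrt (x ^ 2 + y ^ 2).
Proof. reflexivity. Qed.

Lemma Cmod_z_lt : 0 < Cmod z < 1.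
Proof. rewrite Cmod_z. split. apply sqrt_lt_R0; lra. rewrite <- sqrt_1. apply sqrt_lt_1; lra. Qed.

Lemma radius_gt (c : nat -> R) : (forall n, Rabs (c n) <= 2 * Cmod z ^ n) ->
  forall t, 0 <= t <= 1 -> Rbar_lt (Rabs t) (CV_radius c).
Proof.
  intros Hc t Ht. pose proof Cmod_z_lt as Hm.
  set (rho := (1 + / Cmod z) / 2).
  assert (H1 : 1 < / Cmod z). { rewrite <- Rinv_1. apply Rinv_lt_contravar; lra. }
  assert (Hr : Cmod z * rho < 1). { unfold rho. field_simplify; lra. }
  assert (HD : CV_disk c rho).
  { unfold CV_disk. apply (@ex_series_le R_AbsRing R_CompleteNormedModule _ (fun n => 2 * (Cmod z * rho) ^ n)).
    - intro n. change (norm (Rabs (c n * rho ^ n))) with (Rabs (Rabs (c n * rho ^ n))).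
      rewrite Rabs_Rabsolu, Rabs_mult, Rpow_mult_distr, (Rabs_pos_eq (rho ^ n)).
      2:{ apply pow_le; unfold rho; lra. }
      rewrite <- Rmult_assoc. apply Rmult_le_compat_r. apply pow_le; unfold rho; lra. apply Hc.
    - apply (@ex_series_scal R_AbsRing R_NormedModule 2 (fun n => (Cmod z * rho) ^ n)).
      apply ex_series_geom. rewrite Rabs_pos_eq; [lra|]. apply Rmult_le_pos; unfold rho; lra. }
  assert (Hle : Rbar_le rho (CV_radius c)).
  { unfold CV_radius. destruct (Lub_Rbar_correct (CV_disk c)) as [Hub _]. apply Hub. exact HD. }
  eapply Rbar_lt_le_trans; [|exact Hle]. simpl. rewrite Rabs_pos_eq by lra. unfold rho; lra.
Qed.

Lemma au_bound n : Rabs (au n) <= 2 * Cmod z ^ n.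
Proof.
  unfold au. rewrite Rabs_mult. rewrite <- Cmod_pow. apply Rmult_le_compat; try apply Rabs_pos.
  apply dlog_bound. apply re_le_Cmod.
Qed.
Lemma av_bound n : Rabs (av n) <= 2 * Cmod z ^ n.
Proof.
  unfold av. rewrite Rabs_mult. rewrite <- Cmod_pow. apply Rmult_le_compat; try apply Rabs_pos.
  apply dlog_bound. eapply Rle_trans; [apply Rmax_r|apply Rmax_Cmod].
Qed.


Definition W1 (t : R) : C := (z / (1 - RtoC t * z) + z / (1 + RtoC t * z))%C.
Definition U (t : R) : R := (ln ((1 + t*x)^2 + (t*y)^2) - ln ((1 - t*x)^2 + (t*y)^2)) / 2.
Definition V (t : R) : R := atan (2*t*y / (1 - t^2*(x^2+y^2))).

Lemma pos_facts t : 0 <= t <= 1 -> 0 < 1 + t * x /\ 0 < 1 - t * x /\ 0 < 1 - t^2*(x^2+y^2).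
Proof.
  intros Ht. assert (x^2 < 1) by nra. assert (-1 < x < 1) by nra.
  assert (t^2 <= 1) by nra. assert (t^2 * (x^2+y^2) <= 1 * (x^2+y^2)).
  { apply Rmult_le_compat_r; nra. }
  repeat split; nra.
Qed.

Lemma dU t : 0 <= t <= 1 -> is_derive U t (Re (W1 t)).
Proof.
  intros Ht. destruct (pos_facts t Ht) as [P1 [P2 P3]].
  unfold U, W1, z. auto_derive.
  - split; [nra|split; [nra|auto]].
  - simpl. field. split; nra.
Qed.

Lemma dV t : 0 <= t <= 1 -> is_derive V t (Im (W1 t)).
Proof.
  intros Ht. destruct (pos_facts t Ht) as [P1 [P2 P3]].
  unfold V, W1, z. auto_derive.
  - nra.
  - simpl. field. repeat split; try nra.
Qed.

Lemma Cmod_tz t : 0 <= t <= 1 -> Cmod (RtoC t * z) < 1.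
Proof.
  intros Ht. pose proof Cmod_z_lt. rewrite Cmod_mult, Cmod_R, Rabs_pos_eq by lra.
  nra.
Qed.

Lemma geom_pair t : 0 <= t <= 1 ->
  is_series (fun n => (RtoC (t ^ n + (- t) ^ n) * Cpow z (S n))%C) (W1 t).
Proof.
  intros Ht. pose proof (Cmod_tz t Ht) as Hw.
  assert (Hw' : Cmod (RtoC (-t) * z) < 1).
  { replace (RtoC (-t) * z)%C with (- (RtoC t * z))%C by (apply injective_projections; simpl; ring).
    rewrite Cmod_opp; auto. }
  pose proof (@is_series_scal C_AbsRing C_NormedModule z _ _ (geomC _ Hw)) as G1.
  pose proof (@is_series_scal C_AbsRing C_NormedModule z _ _ (geomC _ Hw')) as G2.
  pose proof (is_series_plus _ _ _ _ G1 G2) as G.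
  replace (W1 t) with (plus (scal z (/ (1 - RtoC t * z))%C) (scal z (/ (1 - RtoC (-t) * z))%C)).
  - eapply is_series_ext; [|exact G]. intro n. unfold ser. simpl.
    change (z * (RtoC 1 * Cpow (RtoC t * z) n) + z * (RtoC 1 * Cpow (RtoC (-t) * z) n)
      = RtoC (t ^ n + (- t) ^ n) * (z * Cpow z n))%C.
    rewrite !Cpow_mult_l, <- !RtoC_pow, RtoC_plus. ring.
  - unfold W1. unfold plus, scal; simpl. unfold mult; simpl.
    replace (1 - RtoC (-t) * z)%C with (1 + RtoC t * z)%C by (apply injective_projections; simpl; ring).
    reflexivity.
Qed.

Lemma PSd_au t : 0 <= t <= 1 -> is_pseries (PS_derive au) t (Re (W1 t)).
Proof.
  intros Ht. apply is_pseries_R.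
  eapply is_series_ext; [|apply (is_series_Re _ _ (geom_pair t Ht))].
  intro n. cbv beta. rewrite re_scal_l. unfold PS_derive, au, dlog.
  replace (-t) with (-1 * t) by ring. rewrite Rpow_mult_distr. simpl pow.
  apply PSd_alg.
Qed.

Lemma PSd_av t : 0 <= t <= 1 -> is_pseries (PS_derive av) t (Im (W1 t)).
Proof.
  intros Ht. apply is_pseries_R.
  eapply is_series_ext; [|apply (is_series_Im _ _ (geom_pair t Ht))].
  intro n. cbv beta. rewrite im_scal_l. unfold PS_derive, av, dlog.
  replace (-t) with (-1 * t) by ring. rewrite Rpow_mult_distr. simpl pow.
  apply PSd_alg.
Qed.

Lemma PS_au_eq : PSeries au 1 = U 1.
Proof.
  set (f := fun t => minus (PSeries au t) (U t)).
  assert (H : f 0 = f 1).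
  { apply (eq_is_derive f 0 1); [|lra]. intros t Ht. unfold f.
    assert (H1 : is_derive (PSeries au) t (Re (W1 t))).
    { rewrite <- (is_pseries_unique _ _ _ (PSd_au t Ht)).
      apply is_derive_PSeries. apply radius_gt; auto. apply au_bound. }
    pose proof (is_derive_minus _ _ _ _ _ H1 (dU t Ht)) as Hd.
    rewrite minus_eq_zero in Hd. exact Hd. }
  change (PSeries au 0 + - U 0 = PSeries au 1 + - U 1) in H.
  assert (A0 : au 0 = 0) by (unfold au, dlog; simpl; unfold Rdiv; ring).
  assert (U0 : U 0 = 0).
  { unfold U. replace ((1 + 0 * x) ^ 2 + (0 * y) ^ 2) with 1 by ring.
    replace ((1 - 0 * x) ^ 2 + (0 * y) ^ 2) with 1 by ring. unfold Rdiv; ring. }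
  rewrite PSeries_0, A0, U0 in H. lra.
Qed.

Lemma PS_av_eq : PSeries av 1 = V 1.
Proof.
  set (f := fun t => minus (PSeries av t) (V t)).
  assert (H : f 0 = f 1).
  { apply (eq_is_derive f 0 1); [|lra]. intros t Ht. unfold f.
    assert (H1 : is_derive (PSeries av) t (Im (W1 t))).
    { rewrite <- (is_pseries_unique _ _ _ (PSd_av t Ht)).
      apply is_derive_PSeries. apply radius_gt; auto. apply av_bound. }
    pose proof (is_derive_minus _ _ _ _ _ H1 (dV t Ht)) as Hd.
    rewrite minus_eq_zero in Hd. exact Hd. }
  change (PSeries av 0 + - V 0 = PSeries av 1 + - V 1) in H.
  assert (A0 : av 0 = 0) by (unfold av, dlog; simpl; unfold Rdiv; ring).
  assert (V0 : V 0 = 0).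
  { unfold V. replace (2 * 0 * y / (1 - 0 ^ 2 * (x ^ 2 + y ^ 2))) with 0 by (field; lra).
    apply atan_0. }
  rewrite PSeries_0, A0, V0 in H. lra.
Qed.

Lemma series_au : is_series au (U 1).
Proof.
  rewrite <- PS_au_eq.
  pose proof (PSeries_correct au 1 (CV_radius_inside _ _ (radius_gt au au_bound 1 ltac:(lra)))) as H.
  apply is_pseries_R in H. eapply is_series_ext; [|exact H]. intro n. cbv beta. rewrite pow1. apply Rmult_1_r.
Qed.

Lemma series_av : is_series av (V 1).
Proof.
  rewrite <- PS_av_eq.
  pose proof (PSeries_correct av 1 (CV_radius_inside _ _ (radius_gt av av_bound 1 ltac:(lra)))) as H.
  apply is_pseries_R in H. eapply is_series_ext; [|exact H]. intro n. cbv beta. rewrite pow1. apply Rmult_1_r.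
Qed.

Lemma Cln_val : Cln ((1 + z) / (1 - z))%C = (U 1, V 1).
Proof.
  destruct (pos_facts 1 ltac:(lra)) as [P1 [P2 P3]].
  assert (D1 : 0 < (1 + x)^2 + y^2) by nra.
  assert (D2 : 0 < (1 - x)^2 + y^2) by nra.
  assert (Ew : ((1 + z) / (1 - z))%C = ((1 - (x^2+y^2)) / ((1-x)^2+y^2), 2*y/((1-x)^2+y^2))).
  { unfold z. apply injective_projections; simpl; field; nra. }
  assert (Hre : ln (Cmod ((1 + z) / (1 - z))%C) = U 1).
  { rewrite Cmod_div.
    2:{ intro E. apply (f_equal fst) in E. simpl in E. nra. }
    assert (E1 : Cmod (1 + z) = sqrt ((1 + 1*x)^2 + (1*y)^2)) by (unfold Cmod, z; simpl; f_equal; ring).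
    assert (E2 : Cmod (1 - z) = sqrt ((1 - 1*x)^2 + (1*y)^2)) by (unfold Cmod, z; simpl; f_equal; ring).
    rewrite E1, E2. rewrite ln_div by (apply sqrt_lt_R0; nra).
    rewrite !ln_sqrt' by nra. unfold U. field. }
  assert (Him : Carg ((1 + z) / (1 - z))%C = V 1).
  { rewrite carg_atan; rewrite Ew; simpl.
    - unfold V. f_equal. field. split; nra.
    - apply Rdiv_lt_0_compat; nra. }
  unfold Cln. rewrite Hre, Him. apply injective_projections; simpl; ring.
Qed.

Lemma log_series : is_series (ser dlog z) (Cln ((1 + z) / (1 - z))%C).
Proof.
  rewrite Cln_val. apply is_series_RI.
  - eapply is_series_ext; [|exact series_au]. intro n. unfold ser, au. rewrite re_scal_l. reflexivity.
  - eapply is_series_ext; [|exact series_av]. intro n. unfold ser, av. rewrite im_scal_l. reflexivity.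
Qed.

End LogS.

End Part_P5.

Section Part_P6.
Local Open Scope R_scope.

Lemma n1S n : (-1) ^ (S n) = - (-1) ^ n.
Proof. simpl; ring. Qed.
Lemma n1sq n : (-1) ^ n * (-1) ^ n = 1.
Proof. rewrite <- Rpow_mult_distr. replace (-1 * -1) with 1 by ring. apply pow1. Qed.
Lemma n1_2k k : (-1) ^ (2 * k) = 1.
Proof. rewrite pow_mult. replace ((-1) ^ 2) with 1 by ring. apply pow1. Qed.

Lemma sum_n_scal_l (c : R) (f : nat -> R) n : sum_n (fun j => c * f j) n = c * sum_n f n.
Proof. induction n. rewrite !sum_O; auto. rewrite !sum_Sn, IHn. unfold plus; simpl; ring. Qed.

Lemma sum_front (f : nat -> R) n : sum_n f (S n) = f 0%nat + sum_n (fun j => f (S j)) n.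
Proof.
  induction n. rewrite sum_Sn, !sum_O. reflexivity.
  rewrite sum_Sn, IHn, sum_Sn. unfold plus; simpl; ring.
Qed.

Lemma binomR_1 M : binomR M 1 = INR M.
Proof.
  destruct M. rewrite binomR_gt by lia. reflexivity.
  pose proof (binomR_absorb M 0). rewrite binomR_0 in H. simpl INR in H at 1. lra.
Qed.

Lemma sum_n_extR (f g : nat -> R) n : (forall j, (j <= n)%nat -> f j = g j) -> sum_n f n = sum_n g n.
Proof. apply sum_n_ext_loc. Qed.

Lemma Fsum M m : (1 <= m)%nat ->
  @eq R (sum_n (fun j => (-1) ^ j * binomR M (m - 1 - j) / INR (m - j)) (m - 1))
   ((binomR M m - (-1) ^ m) / INR (S M)).
Proof.
  intros Hm. assert (HM : INR (S M) <> 0) by (apply not_0_INR; lia).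
  destruct m as [|m0]; [lia|]. clear Hm.
  induction m0.
  - rewrite sum_O. replace (1 - 1 - 0)%nat with 0%nat by lia. replace (1 - 0)%nat with 1%nat by lia.
    rewrite binomR_0, binomR_1, (S_INR M). simpl pow. change (INR 1) with 1. pose proof (pos_INR M). field. lra.
  - replace (S (S m0) - 1)%nat with (S m0) by lia. rewrite sum_front.
    rewrite (sum_n_extR _ (fun j => - ((-1) ^ j * binomR M (S m0 - 1 - j) / INR (S m0 - j)))).
    2:{ intros j Hj. replace (S (S m0) - 1 - S j)%nat with (S m0 - 1 - j)%nat by lia.
        replace (S (S m0) - S j)%nat with (S m0 - j)%nat by lia. rewrite n1S. replace (S m0 - S j)%nat with (S m0 - 1 - j)%nat by lia. unfold Rdiv; ring. }
    rewrite (sum_n_extR _ (fun j => -1 * ((-1) ^ j * binomR M (S m0 - 1 - j) / INR (S m0 - j)))).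
    2:{ intros j _; ring. }
    rewrite sum_n_scal_l. replace (S m0 - 1)%nat with m0 in IHm0 by lia.
    replace (S m0 - 1)%nat with m0 by lia. rewrite IHm0.
    replace (S (S m0) - 1 - 0)%nat with (S m0) by lia. replace (S (S m0) - 0)%nat with (S (S m0)) by lia.
    pose proof (binomR_absorb M (S m0)) as A. pose proof (binomR_pascal M (S m0)) as P.
    assert (INR (S (S m0)) <> 0) by (apply not_0_INR; lia).
    rewrite P in A. simpl pow.
    apply (Rmult_eq_reg_r (INR (S M) * INR (S (S m0)))); [|apply Rmult_integral_contrapositive; auto].
    field_simplify; auto. 
    replace (binomR M (S m0) * INR (S M) * INR (S (S m0))) with (INR (S (S m0)) * (binomR M (S m0) * INR (S M))) by ring.
    rewrite Nat.sub_0_r. rewrite Rmult_plus_distr_l in A. lra.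
Qed.

Definition bet (p N : nat) : R := shift (fun M => binomR M (p - 1)) N.
Definition alp (p N : nat) : R := (-1) ^ p * ((-1) ^ N * bet p N).
Definition cc1 (m j N : nat) : R :=
  / INR (m - j) * ((-1) ^ (m - 1) * alp (m - j) N + (-1) ^ j * bet (m - j) N).
Definition Xc (m N : nat) : R :=
  (-1) ^ (m - 1) * (alp m N + / 2 * shift (alp m) N) + -1 * (bet m N + - / 2 * shift (bet m) N).
Definition Yc (m N : nat) : R :=
  (-1) ^ m * (alp m N + shift (alp m) N) + (bet m N + -1 * shift (bet m) N).
Definition ecoef (m N : nat) : R :=
  sum_n (fun j => cc1 m j N) (m - 1) + shift (fun L => 2 / INR m * Xc m L) N
  + shift (fun L => / INR (m - 1) * Yc m L) N + (-1) ^ m * dlog N.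

Lemma sgn_m m : (1 <= m)%nat -> (-1) ^ m = - (-1) ^ (m - 1).
Proof. intros. replace m with (S (m - 1)) at 1 by lia. apply n1S. Qed.

Lemma c1_S m j M : (1 <= m)%nat -> (j <= m - 1)%nat ->
  cc1 m j (S M) = (1 - (-1) ^ (S M)) * ((-1) ^ j * binomR M (m - 1 - j) / INR (m - j)).
Proof.
  intros Hm Hj. unfold cc1, alp, bet, shift.
  replace (m - j - 1)%nat with (m - 1 - j)%nat by lia.
  replace (m - j)%nat with (S (m - 1 - j)) by lia.
  set (d := (m - 1 - j)%nat).
  replace (m - 1)%nat with (j + d)%nat by (unfold d; lia).
  rewrite pow_add, n1S.
  pose proof (n1sq d). assert (INR (S d) <> 0) by (apply not_0_INR; lia).
  assert (H2 : ((-1) ^ d) ^ 2 = 1) by (rewrite <- H; ring).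
  field_simplify; auto. rewrite H2. field; auto.
Qed.

Lemma c1sum_S m M : (1 <= m)%nat ->
  @eq R (sum_n (fun j => cc1 m j (S M)) (m - 1)) ((1 - (-1) ^ (S M)) * ((binomR M m - (-1) ^ m) / INR (S M))).
Proof.
  intros Hm. rewrite (sum_n_extR _ (fun j => (1 - (-1) ^ (S M)) * ((-1) ^ j * binomR M (m - 1 - j) / INR (m - j)))).
  2:{ intros j Hj. apply c1_S; auto. }
  rewrite sum_n_scal_l, Fsum; auto.
Qed.

Lemma c1sum_0 m : @eq R (sum_n (fun j => cc1 m j 0) (m - 1)) 0.
Proof.
  rewrite (sum_n_extR _ (fun _ => 0)). 2:{ intros; unfold cc1, alp, bet, shift; ring. }
  rewrite sum_n_const. ring.
Qed.

Lemma e_1 m : (2 <= m)%nat -> ecoef m 1 = 0.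
Proof.
  intros Hm. unfold ecoef. rewrite (c1sum_S m 0) by lia.
  cbn [shift]. unfold Xc, Yc, alp, bet, shift, dlog.
  rewrite (binomR_gt 0 m) by lia. simpl pow. change (INR 1) with 1.
  field. split; apply not_0_INR; lia.
Qed.

Lemma e_even m k : (2 <= m)%nat -> ecoef m (2 * k) = 0.
Proof.
  intros Hm. unfold ecoef. destruct k.
  - replace (2 * 0)%nat with 0%nat by lia. rewrite c1sum_0. cbn [shift]. unfold dlog. simpl pow.
    unfold Rdiv; ring.
  - replace (2 * S k)%nat with (S (S (2 * k))) by lia. rewrite c1sum_S by lia.
    cbn [shift]. unfold Xc, Yc, alp, bet, dlog. cbn [shift].
    rewrite !n1S, n1_2k. rewrite (sgn_m m) by lia.
    set (s := (-1) ^ (m - 1)). assert (Hs : s ^ 2 = 1) by (unfold s; simpl; rewrite Rmult_1_r; apply n1sq).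
    unfold Rdiv. ring_simplify. rewrite Hs. ring.
Qed.

Lemma e_odd m k : (2 <= m)%nat ->
  ecoef m (S (S (S (2 * k)))) =
  4 * binomR (S (S (2 * k))) m / (INR (S (2 * k)) * INR (S (S (2 * k))) * INR (S (S (S (2 * k))))).
Proof.
  intros Hm. unfold ecoef. rewrite c1sum_S by lia.
  cbn [shift]. unfold Xc, Yc, alp, bet, dlog. cbn [shift].
  rewrite !n1S, n1_2k. rewrite (sgn_m m) by lia.
  set (s := (-1) ^ (m - 1)). assert (Hs : s ^ 2 = 1) by (unfold s; simpl; rewrite Rmult_1_r; apply n1sq).
  destruct m as [|[|m']]; try lia.
  replace (S (S m') - 1)%nat with (S m') by lia.
  set (n := (2 * k)%nat).
  pose proof (binomR_absorb (S n) (S m')) as A1.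
  pose proof (binomR_pascal n m') as P1.
  pose proof (binomR_absorb n m') as A2.
  set (B := binomR (S (S n)) (S (S m'))) in *.
  set (b1 := binomR (S n) (S m')) in *.
  set (b0 := binomR n (S m')) in *.
  set (b3 := binomR n m') in *.
  assert (Hb0 : b0 = b1 - b3) by lra.
  rewrite !S_INR in *. set (kk := INR n) in *. set (mm := INR m') in *.
  assert (0 <= kk) by apply pos_INR. assert (0 <= mm) by apply pos_INR.
  assert (Hb1 : b1 = (mm + 1 + 1) * B / (kk + 1 + 1)) by (apply (Rmult_eq_reg_l (kk + 1 + 1)); [field_simplify|]; lra).
  assert (Hb3 : b3 = (mm + 1) * b1 / (kk + 1)) by (apply (Rmult_eq_reg_l (kk + 1)); [field_simplify|]; lra).
  rewrite Hb0, Hb3, Hb1. clearbody s.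
  unfold Rdiv. ring_simplify. rewrite Hs. field. lra.
Qed.

End Part_P6.


Ltac toC := match goal with |- @eq _ ?a ?b => change (@eq C a b) end.

Lemma RtoC_nz (a : R) : a <> 0%R -> RtoC a <> 0.
Proof. intros H E. apply H. apply (f_equal fst) in E. simpl in E. auto. Qed.

Lemma Cpow_div (a b : C) n : b <> 0 -> Cpow (a / b) n = Cpow a n / Cpow b n.
Proof. intros Hb. unfold Cdiv. rewrite Cpow_mult_l, Cpow_inv; auto. Qed.

Lemma Cpow_RtoC_mult (r : R) (c : C) n : Cpow (RtoC r * c) n = RtoC (r ^ n) * Cpow c n.
Proof. rewrite Cpow_mult_l, RtoC_pow. reflexivity. Qed.

Lemma is_series_C (a : nat -> C) (l l' : C) : l = l' -> is_series a l -> is_series a l'.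
Proof. intros ->; auto. Qed.

Lemma Cpow_pred (w : C) p : (1 <= p)%nat -> Cpow w p = w * Cpow w (p - 1).
Proof. intros. destruct p; [lia|]. simpl. rewrite Nat.sub_0_r. reflexivity. Qed.

Lemma Bser p w : (1 <= p)%nat -> (0 < Cmod w < 1)%R ->
  is_series (ser (bet p) w) (Cpow (w / (1 - w)) p).
Proof.
  intros Hp Hw. pose proof (one_minus_nz w (proj2 Hw)) as Hnz.
  pose proof (ser_shift _ _ _ (NB (p - 1) w Hw)) as H.
  replace (S (p - 1)) with p in H by lia.
  apply (is_series_C _ (w * (Cpow w (p - 1) / Cpow (1 - w) p))).
  - rewrite Cpow_div; auto.
    rewrite (Cpow_pred w p Hp).
    field. apply Cpow_nz; auto.
  - eapply ser_ext; [|exact H]. intro N; reflexivity.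
Qed.

Lemma Aser p z : (1 <= p)%nat -> (0 < Cmod z < 1)%R ->
  is_series (ser (alp p) z) (Cpow (z / (1 + z)) p).
Proof.
  intros Hp Hz.
  assert (Hz' : (0 < Cmod (- z) < 1)%R) by (rewrite Cmod_opp; auto).
  pose proof (one_minus_nz (- z) (proj2 Hz')) as Hnz.
  assert (Hnz' : 1 + z <> 0) by (intro E; apply Hnz; rewrite <- E; ring).
  pose proof (Bser p (- z) Hp Hz') as H.
  assert (H2 : is_series (ser (fun N => ((-1) ^ N * bet p N)%R) z) (Cpow (- z / (1 - - z)) p)).
  { eapply is_series_ext; [|exact H]. intro N. unfold ser.
    replace (- z) with (RtoC (-1) * z) by (apply injective_projections; simpl; ring).
    rewrite Cpow_RtoC_mult, RtoC_mult. toC. ring. }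
  pose proof (ser_scal ((-1) ^ p) _ _ _ H2) as H3.
  apply (is_series_C _ (RtoC ((-1) ^ p) * Cpow (- z / (1 - - z)) p)).
  2:{ eapply ser_ext; [|exact H3]. intro N; reflexivity. }
  - replace (- z / (1 - - z)) with (RtoC (-1) * (z / (1 + z))).
    2:{ replace (RtoC (-1)) with (- (1)) by (apply injective_projections; simpl; ring). field; auto. }
    rewrite Cpow_RtoC_mult. rewrite Cmult_assoc, <- RtoC_mult, n1sq. ring.
Qed.

Lemma sum_odd (g : nat -> C) : (forall k, g (2 * k)%nat = 0) -> g 1%nat = 0 ->
  forall n, sum_n (fun k => g (S (S (S (2 * k))))) n = sum_n g (S (S (S (2 * n)))).
Proof.
  intros He H1 n. induction n.
  - rewrite sum_O. simpl. rewrite !sum_Sn, sum_O.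
    pose proof (He 0%nat) as E0. pose proof (He 1%nat) as E2. simpl in E0, E2.
    unfold plus; simpl. rewrite E0, E2, H1. toC. ring.
  - rewrite sum_Sn, IHn.
    replace (S (S (S (2 * S n)))) with (S (S (S (S (S (2 * n)))))) by lia.
    rewrite (sum_Sn g (S (S (S (S (2 * n)))))), (sum_Sn g (S (S (S (2 * n))))).
    replace (S (S (S (S (2 * n))))) with (2 * (S (S n)))%nat by lia. rewrite He.
    replace (2 * S n)%nat with (S (S (2 * n))) by lia.
    unfold plus; simpl. toC. ring.
Qed.

Lemma odd_extract (c : nat -> R) z (S0 : C) :
  (forall k, c (2 * k)%nat = 0%R) -> c 1%nat = 0%R -> is_series (ser c z) S0 ->
  is_series (fun n => ser c z (S (S (S (2 * n))))) S0.
Proof.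
  intros He H1 H. unfold is_series in *.
  assert (Hg : forall k, ser c z (2 * k)%nat = 0) by (intro k; unfold ser; rewrite He; toC; ring).
  assert (Hg1 : ser c z 1%nat = 0) by (unfold ser; rewrite H1; toC; ring).
  eapply filterlim_ext. intro n. symmetry. apply (sum_odd _ Hg Hg1).
  apply (filterlim_comp _ _ _ (fun n => S (S (S (2 * n)))) (sum_n (ser c z)) _ Hierarchy.eventually).
  - apply eventually_subseq. intro n; lia.
  - exact H.
Qed.

Theorem lemma5 (m : nat) (z : C) :
  (2 <= m)%nat -> (0 < Cmod z < 1)%R ->
  is_series
    (fun n : nat => let k := S n in
       (RtoC (binomR (2 * k) m) * Cpow z (2 * k))
       / (RtoC (INR (2 * k - 1)) * RtoC (INR (2 * k)) * RtoC (INR (2 * k + 1))))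
    ( / (4 * z) *
        sum_n (fun j : nat =>
          / RtoC (INR (m - j)) *
          (sgn (m - 1) * Cpow (z / (1 + z)) (m - j)
           + sgn j * Cpow (z / (1 - z)) (m - j))) (m - 1)
      + / (2 * RtoC (INR m)) *
        (sgn (m - 1) * (1 + z / 2) * Cpow (z / (1 + z)) m
         - (1 - z / 2) * Cpow (z / (1 - z)) m)
      + / (4 * RtoC (INR (m - 1))) *
        (sgn m * (1 + z) * Cpow (z / (1 + z)) m
         + (1 - z) * Cpow (z / (1 - z)) m)
      + sgn m / (4 * z) * Cln ((1 + z) / (1 - z))).
Proof.
  intros Hm Hz.
  assert (Hz0 : z <> 0) by (intro E; rewrite E, Cmod_0 in Hz; lra).
  assert (Hm1 : (1 <= m)%nat) by lia.
  assert (HP1 : is_series (ser (fun N => sum_n (fun j => cc1 m j N) (m - 1)) z)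
    (sum_n (fun j : nat => / RtoC (INR (m - j)) *
          (sgn (m - 1) * Cpow (z / (1 + z)) (m - j) + sgn j * Cpow (z / (1 - z)) (m - j))) (m - 1))).
  { apply ser_sum. intros j Hj.
    assert (Hp : (1 <= m - j)%nat) by lia.
    pose proof (ser_scal (/ INR (m - j)) _ _ _ (ser_plus _ _ _ _ _
       (ser_scal ((-1) ^ (m - 1)) _ _ _ (Aser _ z Hp Hz))
       (ser_scal ((-1) ^ j) _ _ _ (Bser _ z Hp Hz)))) as H.
    match type of H with is_series _ ?V => apply (is_series_C _ V) end.
    - unfold sgn. rewrite RtoC_inv; [reflexivity|]. apply not_0_INR; lia.
    - eapply ser_ext; [|exact H]. intro N; reflexivity. }
  pose proof (Aser m z Hm1 Hz) as HA. pose proof (Bser m z Hm1 Hz) as HB.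
  pose proof (ser_plus _ _ _ _ _ (ser_scal ((-1) ^ (m - 1)) _ _ _ (ser_plus _ _ _ _ _ HA (ser_scal (/ 2) _ _ _ (ser_shift _ _ _ HA))))
     (ser_scal (-1) _ _ _ (ser_plus _ _ _ _ _ HB (ser_scal (- / 2) _ _ _ (ser_shift _ _ _ HB))))) as HX.
  pose proof (ser_plus _ _ _ _ _ (ser_scal ((-1) ^ m) _ _ _ (ser_plus _ _ _ _ _ HA (ser_shift _ _ _ HA)))
     (ser_plus _ _ _ _ _ HB (ser_scal (-1) _ _ _ (ser_shift _ _ _ HB)))) as HY.
  assert (Hxy : (0 < fst z ^ 2 + snd z ^ 2 < 1)%R).
  { unfold Cmod in Hz. destruct Hz as [H1 H2].
    split. apply sqrt_lt_0_alt. rewrite sqrt_0; auto.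
    rewrite <- sqrt_1 in H2. apply sqrt_lt_0_alt in H2; auto. }
  pose proof (log_series (fst z) (snd z) Hxy) as HL. rewrite <- surjective_pairing in HL.
  pose proof (ser_plus _ _ _ _ _ (ser_plus _ _ _ _ _ (ser_plus _ _ _ _ _ HP1
      (ser_shift _ _ _ (ser_scal (2 / INR m) _ _ _ HX)))
      (ser_shift _ _ _ (ser_scal (/ INR (m - 1)) _ _ _ HY)))
      (ser_scal ((-1) ^ m) _ _ _ HL)) as HT.
  match type of HT with is_series _ ?V =>
    assert (HE : is_series (ser (ecoef m) z) V) by (eapply ser_ext; [|exact HT]; intro N; reflexivity) end.
  pose proof (odd_extract (ecoef m) z _ (fun k => e_even m k Hm) (e_1 m Hm) HE) as HO.
  pose proof (@is_series_scal C_AbsRing C_NormedModule (/ (4 * z)) _ _ HO) as HS.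
  clear HT HE HO HP1 HA HB HX HY HL.
  assert (H4 : (4 : C) <> 0) by (apply RtoC_nz; lra).
  assert (H2 : (2 : C) <> 0) by (apply RtoC_nz; lra).
  match type of HS with is_series _ ?V => apply (is_series_C _ V) end.
  2:{ eapply is_series_ext; [|exact HS]. intro n. cbv zeta.
      change (scal (/ (4 * z)) ?b) with (/ (4 * z) * b). unfold ser. toC.
      rewrite e_odd by auto.
      replace (2 * S n)%nat with (S (S (2 * n))) by lia.
      replace (S (S (2 * n)) - 1)%nat with (S (2 * n)) by lia.
      replace (S (S (2 * n)) + 1)%nat with (S (S (S (2 * n)))) by lia.
      rewrite (Cpow_S z (S (S (2 * n)))).
      assert (Ha : INR (S (2 * n)) <> 0%R) by (apply not_0_INR; lia).
      assert (Hb : INR (S (S (2 * n))) <> 0%R) by (apply not_0_INR; lia).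
      assert (Hc : INR (S (S (S (2 * n)))) <> 0%R) by (apply not_0_INR; lia).
      rewrite RtoC_div, !RtoC_mult.
      2:{ repeat apply Rmult_integral_contrapositive_currified; auto. }
      field. repeat split; auto; apply RtoC_nz; auto. }
  change (scal (/ (4 * z)) ?b) with (/ (4 * z) * b). toC.
  assert (Hm0 : INR m <> 0%R) by (apply not_0_INR; lia).
  assert (Hm10 : INR (m - 1) <> 0%R) by (apply not_0_INR; lia).
  unfold sgn.
  rewrite (RtoC_div 2 (INR m)) by auto. rewrite (RtoC_inv (INR (m - 1))) by auto.
  rewrite (RtoC_inv 2) by lra. rewrite RtoC_opp, RtoC_inv by lra.
  replace (RtoC (-1)) with (- (1)) by (apply injective_projections; simpl; ring).
  set (SUM := sum_n _ (m - 1)).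
  set (A := Cpow (z / (1 + z)) m). set (B := Cpow (z / (1 - z)) m).
  set (L := Cln ((1 + z) / (1 - z))).
  set (s1 := RtoC ((-1) ^ (m - 1))). set (s0 := RtoC ((-1) ^ m)).
  field. repeat split; auto; apply RtoC_nz; auto.
Qed.
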